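(* Let $\phi:\mathfrak V\to\mathfrak W$ be a $*$-linear map of super operator spaces, and let $\mathcal T\subseteq\mathfrak V$ be a closed subspace with $\mathcal T+\mathcal T^*=\mathfrak V$. Suppose there exist isometric $*$-representations of $\mathfrak V$ and $\mathfrak W$ on $\mathbb Z_2$-graded Hilbert spaces such that the restriction of $\phi$ to $\mathcal T$ is really strongly contractive. Then $\phi$ is strongly contractive (and hence hermitian contractive).
   Context: A $\mathbb Z_2$-graded Hilbert space $\widehat{\mathcal H}$ carries a grading operator $\epsilon$ (a selfadjoint unitary); the superinvolution on $\mathcal B(\widehat{\mathcal H})$ is $x^*=\epsilon\,x^\dagger\,\epsilon$, $x^\dagger$ the ordinary adjoint. A super operator space is an operator space $\mathfrak V$ with an antilinear involution $*$ such that $[x_{ij}]\mapsto[x_{ji}^*]$ is isometric on each $M_n(\mathfrak V)$. An isometric $*$-representation of $\mathfrak V$ is an isometric linear map $\rho:\mathfrak V\to\mathcal B(\widehat{\mathcal H})$ with $\rho(v^* )=\rho(v)^*$ (superinvolution). With respect to such representations, the strong norm of $x$ is $\Vert x\Vert^s=\sup\{|\langle x\xi,\epsilon\xi\rangle| : \xi\in\widehat{\mathcal H},\ \Vert\xi\Vert\le1\}$ (with $x$ identified with its image). A linear map $\phi$ is strongly contractive if $\Vert\phi(x)\Vert^s\le\Vert x\Vert^s$ for all $x$. The restriction of $\phi$ to $\mathcal T$ is really strongly contractive if for every unit vector $\eta$ in the representation space of $\mathfrak W$ and every $x\in\mathcal T$ there is a unit vector $\xi$ in the representation space of $\mathfrak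 V$ such that, with $a=\langle x\xi,\epsilon\xi\rangle$ and $b=\langle\phi(x)\eta,\epsilon\eta\rangle$, one has $|a|\ge|b|$ and $|\mathrm{Re}(a)|\ge|\mathrm{Re}(b)|$. The map $\phi$ is hermitian contractive if $\Vert\phi(x)\Vert\le\Vert x\Vert$ for every $x\in\mathfrak V$ with $x=x^*$. *)

(* Defs.v *)
From HB Require Import structures.
From mathcomp Require Import all_boot all_order all_algebra.
From mathcomp Require Import complex.
From mathcomp Require Import boolp classical_sets reals.
Set Implicit Arguments. Unset Strict Implicit. Unset Printing Implicit Defensive.
Import Order.TTheory GRing.Theory Num.Theory.
Local Open Scope ring_scope.
Local Open Scope classical_set_scope.

Definition cre (R : realType) (z : R[i]) : R := let: Complex a _ := z in a.
Definition cim (R : realType) (z : R[i]) : R := let: Complex _ b := z in b.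

Definition cmod (R : realType) (z : R[i]) : R :=
  Num.sqrt (cre z ^+ 2 + cim z ^+ 2).

Definition inner_product (R : realType) (H : lmodType R[i])
    (ip : H -> H -> R[i]) : Prop :=
  [/\ (forall (a : R[i]) (x y z : H), ip (a *: x + y) z = a * ip x z + ip y z),
      (forall x y : H, ip y x = conjc (ip x y)),
      (forall x : H, 0 <= ip x x) &
      (forall x : H, ip x x = 0 -> x = 0)].

Definition hnorm (R : realType) (H : lmodType R[i]) (ip : H -> H -> R[i])
    (x : H) : R := Num.sqrt (cre (ip x x)).

Definition complete_ip (R : realType) (H : lmodType R[i])
    (ip : H -> H -> R[i]) : Prop :=
  forall u : nat -> H,
    (forall e : R, 0 < e -> exists N : nat, forall m n : nat,
        (N <= m)%N -> (N <= n)%N -> hnorm ip (u m - u n) < e) ->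
    exists l : H, forall e : R, 0 < e -> exists N : nat, forall n : nat,
        (N <= n)%N -> hnorm ip (u n - l) < e.

(* (ip, eps) is a Z2-graded Hilbert space: ip is a complete inner product
   and eps is a selfadjoint unitary (grading operator). *)
Definition graded_hilbert (R : realType) (H : lmodType R[i])
    (ip : H -> H -> R[i]) (eps : H -> H) : Prop :=
  [/\ inner_product ip, complete_ip ip,
      (forall (a : R[i]) (x y : H), eps (a *: x + y) = a *: eps x + eps y),
      (forall x : H, eps (eps x) = x) &
      (forall x y : H, ip (eps x) y = ip x (eps y))].

Definition bounded_op (R : realType) (H : lmodType R[i])
    (ip : H -> H -> R[i]) (x : H -> H) : Prop :=
  (forall (a : R[i]) (u v : H), x (a *: u + v) = a *: x u + x v) /\
  exists c : R, forall u : H, hnorm ip (x u) <= c * hnorm ip u.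

Definition is_adjoint (R : realType) (H : lmodType R[i])
    (ip : H -> H -> R[i]) (x xd : H -> H) : Prop :=
  forall u v : H, ip (xd u) v = ip u (x v).

Definition opnorm (R : realType) (H : lmodType R[i])
    (ip : H -> H -> R[i]) (x : H -> H) : R :=
  sup [set hnorm ip (x u) | u in [set u : H | hnorm ip u <= 1]].

Definition snorm (R : realType) (H : lmodType R[i])
    (ip : H -> H -> R[i]) (eps : H -> H) (x : H -> H) : R :=
  sup [set cmod (ip (x u) (eps u)) | u in [set u : H | hnorm ip u <= 1]].

Definition cvnorm (R : realType) (n : nat) (v : 'cV[R[i]]_n) : R :=
  Num.sqrt (\sum_(i < n) cmod (v i ord0) ^+ 2).

Definition smxnorm (R : realType) (n m : nat) (a : 'M[R[i]]_(n, m)) : R :=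
  sup [set cvnorm (a *m v) | v in [set v : 'cV[R[i]]_m | cvnorm v <= 1]].

Definition lsmx (R : realType) (V : lmodType R[i]) (n m p : nat)
    (a : 'M[R[i]]_(n, m)) (X : 'M[V]_(m, p)) : 'M[V]_(n, p) :=
  \matrix_(i, j) \sum_(k < m) a i k *: X k j.

Definition rsmx (R : realType) (V : lmodType R[i]) (n m p : nat)
    (X : 'M[V]_(n, m)) (b : 'M[R[i]]_(m, p)) : 'M[V]_(n, p) :=
  \matrix_(i, j) \sum_(k < m) b k j *: X i k.

(* mn is a family of norms on the M_n(V) satisfying Ruan's axioms *)
Definition operator_space (R : realType) (V : lmodType R[i])
    (mn : forall n, 'M[V]_n -> R) : Prop :=
  [/\ (forall n (X : 'M[V]_n), mn n X = 0 -> X = 0),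
      (forall n (X Y : 'M[V]_n), mn n (X + Y) <= mn n X + mn n Y),
      (forall n (a : R[i]) (X : 'M[V]_n),
          mn n (\matrix_(i, j) (a *: X i j)) = cmod a * mn n X),
      (forall n m (X : 'M[V]_n) (Y : 'M[V]_m),
          mn (n + m)%N (block_mx X 0 0 Y) = Num.max (mn n X) (mn m Y)) &
      (forall n m (a : 'M[R[i]]_(n, m)) (X : 'M[V]_m) (b : 'M[R[i]]_(m, n)),
          mn n (rsmx (lsmx a X) b) <= smxnorm a * mn m X * smxnorm b)].

Definition vnorm (R : realType) (V : lmodType R[i])
    (mn : forall n, 'M[V]_n -> R) (v : V) : R :=
  mn 1%N (const_mx v).

Definition super_operator_space (R : realType) (V : lmodType R[i])
    (mn : forall n, 'M[V]_n -> R) (star : V -> V) : Prop :=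
  [/\ operator_space mn,
      (forall (a : R[i]) (x y : V), star (a *: x + y) = conjc a *: star x + star y),
      (forall x : V, star (star x) = x) &
      (forall n (X : 'M[V]_n), mn n (\matrix_(i, j) star (X j i)) = mn n X)].

(* rho : V -> B(H) is linear, isometric, and rho(v^* ) = rho(v)^*, where
   x^* = eps x^dagger eps is the superinvolution of B(H). *)
Definition iso_star_rep (R : realType) (V : lmodType R[i])
    (mn : forall n, 'M[V]_n -> R) (star : V -> V)
    (H : lmodType R[i]) (ip : H -> H -> R[i]) (eps : H -> H)
    (rho : V -> H -> H) : Prop :=
  [/\ (forall v : V, bounded_op ip (rho v)),
      (forall (a : R[i]) (v w : V) (u : H),
          rho (a *: v + w) u = a *: rho v u + rho w u),
      (forall v : V, opnorm ip (rho v) = vnorm mn v) &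
      (forall v : V, exists xd : H -> H,
          is_adjoint ip (rho v) xd /\
          forall u : H, rho (star v) u = eps (xd (eps u)))].

Definition star_linear (R : realType) (V W : lmodType R[i])
    (starV : V -> V) (starW : W -> W) (phi : V -> W) : Prop :=
  (forall (a : R[i]) (x y : V), phi (a *: x + y) = a *: phi x + phi y) /\
  (forall x : V, phi (starV x) = starW (phi x)).

Definition closed_subspace (R : realType) (V : lmodType R[i])
    (mn : forall n, 'M[V]_n -> R) (T : set V) : Prop :=
  [/\ T 0,
      (forall (a : R[i]) (x y : V), T x -> T y -> T (a *: x + y)) &
      (forall v : V, (forall e : R, 0 < e ->
          exists t : V, T t /\ vnorm mn (v - t) < e) -> T v)].

Definition really_strongly_contractive (R : realType) (V W : lmodType R[i])
    (H1 : lmodType R[i]) (ip1 : H1 -> H1 -> R[i]) (eps1 : H1 -> H1)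
    (rho1 : V -> H1 -> H1)
    (H2 : lmodType R[i]) (ip2 : H2 -> H2 -> R[i]) (eps2 : H2 -> H2)
    (rho2 : W -> H2 -> H2) (phi : V -> W) (T : set V) : Prop :=
  forall (eta : H2) (x : V), hnorm ip2 eta = 1 -> T x ->
    exists xi : H1, hnorm ip1 xi = 1 /\
      let a := ip1 (rho1 x xi) (eps1 xi) in
      let b := ip2 (rho2 (phi x) eta) (eps2 eta) in
      cmod b <= cmod a /\ `|cre b| <= `|cre a|.

Definition strongly_contractive (R : realType) (V W : lmodType R[i])
    (H1 : lmodType R[i]) (ip1 : H1 -> H1 -> R[i]) (eps1 : H1 -> H1)
    (rho1 : V -> H1 -> H1)
    (H2 : lmodType R[i]) (ip2 : H2 -> H2 -> R[i]) (eps2 : H2 -> H2)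
    (rho2 : W -> H2 -> H2) (phi : V -> W) : Prop :=
  forall x : V, snorm ip2 eps2 (rho2 (phi x)) <= snorm ip1 eps1 (rho1 x).

Definition hermitian_contractive (R : realType) (V W : lmodType R[i])
    (mnV : forall n, 'M[V]_n -> R) (starV : V -> V)
    (mnW : forall n, 'M[W]_n -> R) (phi : V -> W) : Prop :=
  forall x : V, starV x = x -> vnorm mnW (phi x) <= vnorm mnV x.

(* Main.v *)
Require Import Defs.
From HB Require Import structures.
From mathcomp Require Import all_boot all_order all_algebra.
From mathcomp Require Import complex.
From mathcomp Require Import boolp classical_sets reals.
Local Open Scope ring_scope.
Local Open Scope classical_set_scope.

From mathcomp Require Import ring lra.

Module Aux.
Set Implicit Arguments. Unset Strict Implicit. Unset Printing Implicit Defensive.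
Import Order.TTheory GRing.Theory Num.Theory.
Local Open Scope ring_scope.
Local Open Scope classical_set_scope.
Local Open Scope complex_scope.

Section CX.
Variable R : realType.
Implicit Types z w : R[i].

Lemma cmod_ge0 z : 0 <= cmod z. Proof. exact: sqrtr_ge0. Qed.

Lemma cmodM z w : cmod (z * w) = cmod z * cmod w.
Proof.
case: z => a b; case: w => c d; rewrite /cmod /= -sqrtrM; last by nra.
congr Num.sqrt; ring.
Qed.

Lemma cre_le_cmod z : `|cre z| <= cmod z.
Proof.
case: z => a b; rewrite /cmod /=.
rewrite -(sqrtr_sqr a); apply: ler_wsqrtr; nra.
Qed.

Lemma cmod_conj z : cmod (conjc z) = cmod z.
Proof. by case: z => a b; rewrite /cmod /= sqrrN. Qed.

Lemma cre_conj z : cre (conjc z) = cre z.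
Proof. by case: z. Qed.

Lemma cre_add z w : cre (z + w) = cre z + cre w.
Proof. by case: z; case: w. Qed.

Lemma cmod_real (r : R) : cmod r%:C = `|r|.
Proof. by rewrite /cmod /= expr0n /= addr0 sqrtr_sqr. Qed.

Lemma cre_real (r : R) : cre r%:C = r. Proof. by []. Qed.

Lemma cmod0 : cmod (0 : R[i]) = 0.
Proof. by rewrite /cmod /= expr0n /= addr0 sqrtr0. Qed.

Lemma cmod_eq0 z : cmod z = 0 -> z = 0.
Proof.
case: z => a b; rewrite /cmod /= => /eqP; rewrite sqrtr_eq0 => h.
have ha : a = 0 by nra. have hb : b = 0 by nra.
by rewrite ha hb.
Qed.

Lemma cmod_sqr z : cmod z ^+ 2 = cre z ^+ 2 + cim z ^+ 2.
Proof. rewrite /cmod sqr_sqrtr //; case: z => a b /=; nra. Qed.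

Lemma conj_mul_self z : conjc z * z = (cmod z ^+ 2)%:C.
Proof.
rewrite cmod_sqr; case: z => a b /=; apply/eqP; rewrite eq_complex /=.
apply/andP; split; apply/eqP; ring.
Qed.

Lemma rotate z : exists e, cmod e = 1 /\ e * z = (cmod z)%:C.
Proof.
have [->|nz] := eqVneq z 0.
  exists 1; rewrite mulr0 cmod0; split=> //.
  by rewrite /cmod /= expr1n expr0n /= addr0 sqrtr1.
have cz : cmod z != 0 by apply/eqP => /cmod_eq0 /eqP; rewrite (negbTE nz).
exists (conjc z * ((cmod z)^-1)%:C); split.
  by rewrite cmodM cmod_conj cmod_real ger0_norm ?invr_ge0 ?cmod_ge0 // mulfV.
rewrite mulrAC conj_mul_self -rmorphM; congr _%:C.
by rewrite expr2 -mulrA mulfV // mulr1.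
Qed.

Lemma ge0_real z : 0 <= z -> z = (cre z)%:C.
Proof. by case: z => a b; rewrite lecE /= => /andP[/eqP -> _]. Qed.
Lemma ge0_cre z : 0 <= z -> 0 <= cre z.
Proof. by case: z => a b; rewrite lecE /= => /andP[_ ->]. Qed.

End CX.


Section CX2.
Variable R : realType.
Implicit Types z w : R[i].
Lemma cre_opp z : cre (- z) = - cre z. Proof. by case: z. Qed.
Lemma cre_realM (r : R) z : cre (r%:C * z) = r * cre z.
Proof. by case: z => a b /=; rewrite !mul0r subr0. Qed.
End CX2.

Definition linf (R : realType) (U V : lmodType R[i]) (f : U -> V) :=
  forall (a : R[i]) x y, f (a *: x + y) = a *: f x + f y.

Section Lin.
Variables (R : realType) (U V : lmodType R[i]) (f : U -> V) (hf : linf f).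
Lemma lin0 : f 0 = 0.
Proof. have := hf 1 0 0; rewrite !scale1r addr0 => h. by apply: (@addrI _ (f 0)); rewrite addr0 -h. Qed.
Lemma linD x y : f (x + y) = f x + f y.
Proof. by have := hf 1 x y; rewrite !scale1r. Qed.
Lemma linZ a x : f (a *: x) = a *: f x.
Proof. by have := hf a x 0; rewrite !addr0 lin0 addr0. Qed.
Lemma linN x : f (- x) = - f x.
Proof. by rewrite -scaleN1r linZ scaleN1r. Qed.
Lemma linB x y : f (x - y) = f x - f y.
Proof. by rewrite linD linN. Qed.
End Lin.

Section Hilb.
Variables (R : realType) (H : lmodType R[i]) (ip : H -> H -> R[i]) (eps : H -> H).
Hypothesis hH : graded_hilbert ip eps.

Let hip : inner_product ip. Proof. by case: hH. Qed.

Lemma ipD x y z : ip (x + y) z = ip x z + ip y z.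
Proof. by case: hip => L _ _ _; have := L 1 x y z; rewrite scale1r mul1r. Qed.
Lemma ipZ a x z : ip (a *: x) z = a * ip x z.
Proof.
case: hip => L _ _ _; have := L a x 0 z; rewrite addr0 => ->.
have := L 1 0 0 z; rewrite scale1r addr0 mul1r => h.
suff -> : ip 0 z = 0 by rewrite addr0.
by apply: (@addrI _ (ip 0 z)); rewrite addr0 -h.
Qed.
Lemma ip0 z : ip 0 z = 0.
Proof. by rewrite -(scale0r 0) ipZ mul0r. Qed.
Lemma ipN x z : ip (- x) z = - ip x z.
Proof. by rewrite -scaleN1r ipZ mulN1r. Qed.
Lemma ipC x y : ip y x = conjc (ip x y).
Proof. by case: hip. Qed.
Lemma ipDr x y z : ip z (x + y) = ip z x + ip z y.
Proof. by rewrite ipC ipD rmorphD /= (ipC x z) (ipC y z). Qed.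
Lemma ipZr a x z : ip z (a *: x) = conjc a * ip z x.
Proof. by rewrite ipC ipZ rmorphM /= (ipC x z). Qed.
Lemma ipNr x z : ip z (- x) = - ip z x.
Proof. by rewrite ipC ipN rmorphN /= (ipC x z). Qed.
Lemma ip0r z : ip z 0 = 0.
Proof. by rewrite ipC ip0 conjc0. Qed.

Definition nsq x := cre (ip x x).
Lemma ipxx x : ip x x = (nsq x)%:C.
Proof. by case: hip => _ _ P _; apply: ge0_real. Qed.
Lemma nsq_ge0 x : 0 <= nsq x.
Proof. by case: hip => _ _ P _; apply: ge0_cre. Qed.
Lemma nsq_eq0 x : nsq x = 0 -> x = 0.
Proof. by case: hip => _ _ _ P h; apply: P; rewrite ipxx h. Qed.
Lemma hnorm_sqr x : hnorm ip x ^+ 2 = nsq x.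
Proof. by rewrite /hnorm sqr_sqrtr // nsq_ge0. Qed.
Lemma hnorm_ge0 x : 0 <= hnorm ip x.
Proof. exact: sqrtr_ge0. Qed.
Lemma hnorm_eq0 x : hnorm ip x = 0 -> x = 0.
Proof. by move=> h; apply: nsq_eq0; rewrite -hnorm_sqr h expr0n. Qed.
Lemma nsqZ a x : nsq (a *: x) = cmod a ^+ 2 * nsq x.
Proof.
rewrite /nsq ipZ ipZr mulrA (mulrC a) conj_mul_self.
exact: cre_realM.
Qed.

Lemma epsL : linf eps. Proof. by case: hH => _ _ L _ _; exact: L. Qed.
Lemma epsK x : eps (eps x) = x. Proof. by case: hH. Qed.
Lemma ip_eps x y : ip (eps x) y = ip x (eps y). Proof. by case: hH. Qed.
Lemma ip_eps2 x y : ip (eps x) (eps y) = ip x y. Proof. by rewrite ip_eps epsK. Qed.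
Lemma nsq_eps x : nsq (eps x) = nsq x. Proof. by rewrite /nsq ip_eps2. Qed.
Lemma hnorm_eps x : hnorm ip (eps x) = hnorm ip x. Proof. by rewrite /hnorm -/(nsq _) nsq_eps. Qed.

Lemma CS_re y z : cre (ip y z) <= hnorm ip y * hnorm ip z.
Proof.
have [hy|hy0] := eqVneq (hnorm ip y) 0.
  by rewrite hy mul0r (hnorm_eq0 hy) ip0.
have [hz|hz0] := eqVneq (hnorm ip z) 0.
  by rewrite hz mulr0 (hnorm_eq0 hz) ip0r.
set a := hnorm ip z; set b := hnorm ip y.
have ha : 0 < a by rewrite lt0r hz0 hnorm_ge0.
have hb : 0 < b by rewrite lt0r hy0 hnorm_ge0.
have := nsq_ge0 (a%:C *: y - b%:C *: z).
rewrite /nsq !(ipD, ipN, ipZ, ipDr, ipNr, ipZr) !conjc_real.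
rewrite !ipxx (ipC z y) !(cre_add, cre_opp, cre_realM, cre_conj) !cre_real.
rewrite -!hnorm_sqr -/a -/b => h.
have h2 : 0 <= (a * b) * (a * b - cre (ip z y)) by nra.
rewrite pmulr_rge0 ?mulr_gt0 // subr_ge0 in h2; by rewrite mulrC.
Qed.

Lemma CS y z : cmod (ip y z) <= hnorm ip y * hnorm ip z.
Proof.
have [e [e1 he]] := rotate (ip y z).
have := CS_re (e *: y) z; rewrite ipZ he cre_real.
suff -> : hnorm ip (e *: y) = hnorm ip y by [].
by rewrite /hnorm -/(nsq _) nsqZ e1 expr1n mul1r.
Qed.

End Hilb.


Section Sup.
Variables (R : realType) (T : Type) (D : set T) (f : T -> R).
Lemma le_sup_img x M : (forall u, D u -> f u <= M) -> D x ->
  f x <= sup [set f u | u in D].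
Proof.
move=> hM Dx; apply: ub_le_sup; last by exists x.
by exists M => _ [u Du <-]; apply: hM.
Qed.
Lemma sup_img_le x M : (forall u, D u -> f u <= M) -> D x ->
  sup [set f u | u in D] <= M.
Proof.
move=> hM Dx; apply: ge_sup; first by exists (f x), x.
by move=> _ [u Du <-]; apply: hM.
Qed.
End Sup.

Section Ops.
Variables (R : realType) (H : lmodType R[i]) (ip : H -> H -> R[i]) (eps : H -> H).
Hypothesis hH : graded_hilbert ip eps.
Variable X : H -> H.
Hypothesis hX : bounded_op ip X.

Let XL : linf X. Proof. by case: hX. Qed.
Definition qf u := ip (X u) (eps u).

Lemma Xbound : exists M, forall u, hnorm ip u <= 1 -> hnorm ip (X u) <= M.
Proof.
case: hX => _ [c hc]; exists `|c| => u hu.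
apply: (le_trans (hc u)); apply: (le_trans (ler_norm _)).
rewrite normrM (ger0_norm (hnorm_ge0 _ _)).
by rewrite -[X in _ <= X]mulr1 ler_wpM2l.
Qed.

Lemma hnorm_le_opnorm u : hnorm ip u <= 1 -> hnorm ip (X u) <= opnorm ip X.
Proof. by case: Xbound => M hM hu; apply: (le_sup_img hM). Qed.

Lemma qf_bound u : hnorm ip u <= 1 -> cmod (qf u) <= opnorm ip X.
Proof.
move=> hu; apply: (le_trans (CS hH _ _)); rewrite (hnorm_eps hH u).
rewrite -[X in _ <= X]mulr1; apply: ler_pM; rewrite ?hnorm_ge0 //.
exact: hnorm_le_opnorm.
Qed.

Lemma qf_le_snorm u : hnorm ip u <= 1 -> cmod (qf u) <= snorm ip eps X.
Proof. move=> hu; apply: (le_sup_img (f := fun u => cmod (qf u)) (D := [set u | hnorm ip u <= 1]) (M := opnorm ip X)) => //; exact: qf_bound. Qed.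

Lemma hnorm0 : hnorm ip (0 : H) = 0.
Proof. by rewrite /hnorm (ip0 hH) /= sqrtr0. Qed.

Lemma snorm_le_opnorm : snorm ip eps X <= opnorm ip X.
Proof. apply: (sup_img_le (f := fun u => cmod (qf u)) (D := [set u | hnorm ip u <= 1]) (x := 0)); first exact: qf_bound. by rewrite /= hnorm0 ler01. Qed.

Lemma snorm_ge0 : 0 <= snorm ip eps X.
Proof.
apply: le_trans (qf_le_snorm (u := 0) _); first exact: cmod_ge0.
by rewrite /= hnorm0 ler01.
Qed.

Lemma qf0 : qf 0 = 0.
Proof. by rewrite /qf (lin0 XL) (ip0 hH). Qed.

Lemma qfZ (r : R) u : qf (r%:C *: u) = (r ^+ 2)%:C * qf u.
Proof.
rewrite /qf (linZ XL) (linZ (epsL hH)) (ipZ hH) (ipZr hH) conjc_real.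
by rewrite mulrA -rmorphM expr2.
Qed.

Lemma scaling M : (forall u, hnorm ip u = 1 -> cmod (qf u) <= M) ->
  forall u, cmod (qf u) <= M * nsq ip u.
Proof.
move=> hM u; have [h0|hn] := eqVneq (hnorm ip u) 0.
  have u0 := hnorm_eq0 hH h0; rewrite u0 qf0 cmod0.
  by rewrite /nsq (ip0 hH) mulr0.
set n := hnorm ip u.
have npos : 0 < n by rewrite lt0r hn hnorm_ge0.
have h1 : hnorm ip ((n^-1)%:C *: u) = 1.
  rewrite /hnorm -/(nsq _ _) (nsqZ hH) cmod_real -(hnorm_sqr hH u) -/n.
  by rewrite ger0_norm ?invr_ge0 ?ltW // -exprMn mulVf ?gt_eqF // expr1n sqrtr1.
have := hM _ h1; rewrite qfZ cmodM cmod_real ger0_norm; last first.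
  by rewrite exprn_ge0 // invr_ge0 ltW.
rewrite -(hnorm_sqr hH u) -/n => h.
have hpos : 0 < n^-1 ^+ 2 by rewrite exprn_gt0 // invr_gt0.
rewrite -(ler_pM2l hpos) mulrCA mulrA.
by rewrite -mulrA -exprMn mulVf ?gt_eqF // expr1n mulr1.
Qed.

End Ops.


Section Herm.
Variables (R : realType) (H : lmodType R[i]) (ip : H -> H -> R[i]) (eps : H -> H).
Hypothesis hH : graded_hilbert ip eps.
Variables (X Xd : H -> H).
Hypothesis hX : bounded_op ip X.
Hypothesis hXd : is_adjoint ip X Xd.
Hypothesis hXh : forall u, X u = eps (Xd (eps u)).

Let XL : linf X. Proof. by case: hX. Qed.
Let EL := epsL hH.
Let A u := eps (X u).

Lemma A_sa a b : ip (A a) b = ip a (A b).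
Proof.
rewrite /A (ip_eps hH) hXh (ip_eps hH) (epsK hH) hXd.
by rewrite -(ip_eps hH).
Qed.

Lemma AD u v : A (u + v) = A u + A v.
Proof. by rewrite /A (linD XL) (linD EL). Qed.
Lemma AB u v : A (u - v) = A u - A v.
Proof. by rewrite /A (linB XL) (linB EL). Qed.

Lemma polar u v : cre (ip (A (u + v)) (u + v)) - cre (ip (A (u - v)) (u - v))
  = 4 * cre (ip (A u) v).
Proof.
rewrite AD AB !(ipD hH, ipN hH, ipDr hH, ipNr hH).
rewrite (A_sa v u) (ipC hH (A u) v).
rewrite !(cre_add, cre_opp, cre_conj); ring.
Qed.

Lemma parallel u v : nsq ip (u + v) + nsq ip (u - v) = 2 * nsq ip u + 2 * nsq ip v.
Proof.
rewrite /nsq !(ipD hH, ipN hH, ipDr hH, ipNr hH).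
rewrite !(cre_add, cre_opp); ring.
Qed.

Lemma qfA u : qf ip eps X u = ip (A u) u.
Proof. by rewrite /qf /A (ip_eps hH). Qed.

Lemma opnorm_le_snorm : opnorm ip X <= snorm ip eps X.
Proof.
set w := snorm ip eps X.
have w0 : 0 <= w by exact: snorm_ge0.
have hq : forall u, cmod (qf ip eps X u) <= w * nsq ip u.
  apply: scaling => // u hu; apply: qf_le_snorm => //; by rewrite hu.
have key : forall u, hnorm ip u <= 1 -> forall t : R,
    4 * (t * nsq ip (A u)) <= 2 * w * (1 + t ^+ 2 * nsq ip (A u)).
  move=> u hu t.
  set v := t%:C *: A u.
  have e1 : cre (ip (A u) v) = t * nsq ip (A u).
    by rewrite /v (ipZr hH) conjc_real (ipxx hH) -rmorphM.
  have e2 : nsq ip v = t ^+ 2 * nsq ip (A u).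
    by rewrite /v (nsqZ hH) cmod_real real_normK // num_real.
  have nu : nsq ip u <= 1.
    by rewrite -(hnorm_sqr hH) -[1](expr1n _ 2) ler_pXn2r ?nnegrE ?hnorm_ge0.
  rewrite -e1 -polar.
  have h1 := hq (u + v); have h2 := hq (u - v); rewrite !qfA in h1 h2.
  have c1 := cre_le_cmod (ip (A (u + v)) (u + v)).
  have c2 := cre_le_cmod (ip (A (u - v)) (u - v)).
  have p := parallel u v.
  have n1 := nsq_ge0 hH (u + v); have n2 := nsq_ge0 hH (u - v).
  have nv := nsq_ge0 hH v.
  rewrite -e2.
  have a1 := ler_norm (cre (ip (A (u + v)) (u + v))).
  have a2 := ler_norm (- cre (ip (A (u - v)) (u - v))).
  rewrite normrN in a2.
  nra.
have hb : forall u, hnorm ip u <= 1 -> hnorm ip (X u) <= w.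
  move=> u hu; set N := nsq ip (A u).
  have N0 : 0 <= N by exact: (nsq_ge0 hH).
  have NX : hnorm ip (X u) = Num.sqrt N by rewrite /N /A /hnorm -/(nsq _ _) (nsq_eps hH).
  rewrite NX; have [wz|wp] := eqVneq w 0.
    have := key u hu 1; rewrite wz -/N => h.
    have hN : N <= 0 by move: h; rewrite expr1n !mul1r mulr0 mul0r -/N; lra.
    have -> : N = 0 by apply/eqP; rewrite eq_le hN N0.
    by rewrite sqrtr0.
  have wpos : 0 < w by rewrite lt0r wp.
  have := key u hu w^-1; rewrite -/N => h.
  have ww : w * w^-1 = 1 by rewrite mulfV.
  have : N <= w ^+ 2.
    have hh : w * (4 * (w^-1 * N)) <= w * (2 * w * (1 + w^-1 ^+ 2 * N)).
      by rewrite ler_pM2l.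
    have : 4 * N <= 2 * w ^+ 2 + 2 * N.
      move: hh; rewrite expr2; set s := w^-1.
      have -> : w * (4 * (s * N)) = 4 * N * (w * s) by ring.
      have -> : w * (2 * w * (1 + s * s * N)) = 2 * w * w + 2 * N * (w * s) * (w * s) by ring.
      by rewrite /s ww !mulr1 -mulrA -expr2.
    nra.
  move=> h2; rewrite -(ger0_norm w0) -sqrtr_sqr; exact: ler_wsqrtr.
apply: (sup_img_le (f := fun u => hnorm ip (X u)) (D := [set u | hnorm ip u <= 1]) (x := 0)) => //.
by rewrite /= (hnorm0 hH) ler01.
Qed.

End Herm.


Section Rep.
Variables (R : realType) (V : lmodType R[i]) (mn : forall n, 'M[V]_n -> R) (star : V -> V).
Variables (H : lmodType R[i]) (ip : H -> H -> R[i]) (eps : H -> H) (rho : V -> H -> H).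
Hypothesis hH : graded_hilbert ip eps.
Hypothesis hr : iso_star_rep mn star ip eps rho.

Let rL : forall a v w u, rho (a *: v + w) u = a *: rho v u + rho w u.
Proof. by case: hr. Qed.
Lemma rho0 u : rho 0 u = 0.
Proof.
have := rL 1 0 0 u; rewrite !scale1r addr0 => h.
by apply: (@addrI _ (rho 0 u)); rewrite addr0 -h.
Qed.
Lemma rhoD v w u : rho (v + w) u = rho v u + rho w u.
Proof. by have := rL 1 v w u; rewrite !scale1r. Qed.
Lemma rhoZ a v u : rho (a *: v) u = a *: rho v u.
Proof. by have := rL a v 0 u; rewrite !addr0 rho0 addr0. Qed.

Definition q1 v u := ip (rho v u) (eps u).
Lemma q1D v w u : q1 (v + w) u = q1 v u + q1 w u.
Proof. by rewrite /q1 rhoD (ipD hH). Qed.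
Lemma q1Z a v u : q1 (a *: v) u = a * q1 v u.
Proof. by rewrite /q1 rhoZ (ipZ hH). Qed.
Lemma q1star v u : q1 (star v) u = conjc (q1 v u).
Proof.
case: hr => _ _ _ /(_ v) [xd [hadj hs]].
by rewrite /q1 hs (ip_eps2 hH) hadj (ipC hH).
Qed.
Lemma rho_bounded v : bounded_op ip (rho v). Proof. by case: hr. Qed.
End Rep.

Theorem main_strong (R : realType)
  (V : lmodType R[i]) (mnV : forall n, 'M[V]_n -> R) (starV : V -> V)
  (W : lmodType R[i]) (mnW : forall n, 'M[W]_n -> R) (starW : W -> W)
  (phi : V -> W) (hphi : star_linear starV starW phi)
  (T : set V) (hT : closed_subspace mnV T)
  (hTT : forall v : V, exists t s : V, [/\ T t, T s & v = t + starV s])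
  (H1 : lmodType R[i]) (ip1 : H1 -> H1 -> R[i]) (eps1 : H1 -> H1)
  (hH1 : graded_hilbert ip1 eps1)
  (rho1 : V -> H1 -> H1) (hrho1 : iso_star_rep mnV starV ip1 eps1 rho1)
  (H2 : lmodType R[i]) (ip2 : H2 -> H2 -> R[i]) (eps2 : H2 -> H2)
  (hH2 : graded_hilbert ip2 eps2)
  (rho2 : W -> H2 -> H2) (hrho2 : iso_star_rep mnW starW ip2 eps2 rho2)
  (hreal : really_strongly_contractive ip1 eps1 rho1 ip2 eps2 rho2 phi T) :
  strongly_contractive ip1 eps1 rho1 ip2 eps2 rho2 phi.
Proof.
have phiL : linf phi by case: hphi.
have phiS : forall x, phi (starV x) = starW (phi x) by case: hphi.
move=> x; set S := snorm ip1 eps1 (rho1 x).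
have S0 : 0 <= S by apply: snorm_ge0 => //; exact: rho_bounded hrho1 x.
have core : forall eta, hnorm ip2 eta = 1 ->
    cmod (qf ip2 eps2 (rho2 (phi x)) eta) <= S.
  move=> eta heta.
  set z := qf ip2 eps2 (rho2 (phi x)) eta.
  have [e [e1 ez]] := rotate z.
  have [t [s [Tt Ts ey]]] := hTT (e *: x).
  have Tu : T (t + s).
    case: hT => _ cl _; have := cl 1 t s Tt Ts; by rewrite scale1r.
  have [xi [hxi [_ hre]]] := hreal eta (t + s) heta Tu.
  have eb : cre (ip2 (rho2 (phi (t + s)) eta) (eps2 eta)) = cmod z.
    have : q1 ip2 eps2 rho2 (phi (e *: x)) eta = (cmod z)%:C.
      by rewrite (linZ phiL) (q1Z hH2 hrho2) -ez.
    rewrite ey (linD phiL) phiS (q1D hH2 hrho2) (q1star hH2 hrho2) => h.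
    rewrite -[cmod z]/(cre (cmod z)%:C) -h (linD phiL) -/(q1 ip2 eps2 rho2 _ eta).
    by rewrite (q1D hH2 hrho2) !cre_add cre_conj.
  have ea : cre (ip1 (rho1 (t + s) xi) (eps1 xi)) = cre (e * q1 ip1 eps1 rho1 x xi).
    rewrite -(q1Z hH1 hrho1) ey (q1D hH1 hrho1) (q1star hH1 hrho1).
    rewrite -/(q1 ip1 eps1 rho1 _ xi) (q1D hH1 hrho1).
    by rewrite !cre_add cre_conj.
  rewrite eb ea in hre.
  apply: le_trans (ler_norm _) _; apply: (le_trans hre).
  apply: le_trans (cre_le_cmod _) _; rewrite cmodM e1 mul1r.
  apply: qf_le_snorm => //; first exact: rho_bounded hrho1 x.
  by rewrite hxi.
have hb := scaling hH2 (rho_bounded hrho2 (phi x)) core.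
apply: (sup_img_le (f := fun u => cmod (qf ip2 eps2 (rho2 (phi x)) u))
   (D := [set u | hnorm ip2 u <= 1]) (x := 0)); last by rewrite /= (hnorm0 hH2) ler01.
move=> u /= hu; apply: le_trans (hb u) _.
rewrite -[X in _ <= X]mulr1 ler_wpM2l //.
by rewrite -(hnorm_sqr hH2) -[1](expr1n _ 2) ler_pXn2r ?nnegrE ?hnorm_ge0.
Qed.

End Aux.
Import Aux.

Theorem mainTheorem5 (R : realType)
  (V : lmodType R[i]) (mnV : forall n, 'M[V]_n -> R) (starV : V -> V)
  (hV : super_operator_space mnV starV)
  (W : lmodType R[i]) (mnW : forall n, 'M[W]_n -> R) (starW : W -> W)
  (hW : super_operator_space mnW starW)
  (phi : V -> W) (hphi : star_linear starV starW phi)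
  (T : set V) (hT : closed_subspace mnV T)
  (hTT : forall v : V, exists t s : V, [/\ T t, T s & v = t + starV s])
  (H1 : lmodType R[i]) (ip1 : H1 -> H1 -> R[i]) (eps1 : H1 -> H1)
  (hH1 : graded_hilbert ip1 eps1)
  (rho1 : V -> H1 -> H1) (hrho1 : iso_star_rep mnV starV ip1 eps1 rho1)
  (H2 : lmodType R[i]) (ip2 : H2 -> H2 -> R[i]) (eps2 : H2 -> H2)
  (hH2 : graded_hilbert ip2 eps2)
  (rho2 : W -> H2 -> H2) (hrho2 : iso_star_rep mnW starW ip2 eps2 rho2)
  (hreal : really_strongly_contractive ip1 eps1 rho1 ip2 eps2 rho2 phi T) :
  strongly_contractive ip1 eps1 rho1 ip2 eps2 rho2 phi /\
  hermitian_contractive mnV starV mnW phi.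
Proof.
split; first exact: (main_strong hphi hT hTT hH1 hrho1 hH2 hrho2 hreal).
move=> x hx.
have hxW : starW (phi x) = phi x by rewrite -(proj2 hphi) hx.
have [bnd1 _ iso1 _] := hrho1.
have [bnd2 _ iso2 adj2] := hrho2.
rewrite -iso2 -iso1.
have [xd [hadj hs]] := adj2 (phi x).
rewrite hxW in hs.
apply: Order.POrderTheory.le_trans (opnorm_le_snorm hH2 (bnd2 (phi x)) hadj hs) _.
apply: Order.POrderTheory.le_trans ((main_strong hphi hT hTT hH1 hrho1 hH2 hrho2 hreal) x) _.
exact: (snorm_le_opnorm hH1 (bnd1 x)).
Qed.
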